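(* There is a normal infinite word $x=a_1a_2a_3\cdots$ over the alphabet $\{0,1\}$ such that $x=\mathrm{even}(x)$, i.e. $a_{2n}=a_n$ for every $n\ge1$.
   Context: For $x=a_1a_2a_3\cdots$, $\mathrm{even}(x)=a_2a_4a_6\cdots$. For words $w,u$, $|w|^{al}_u=|\{i: w[i..i+|u|-1]=u,\ i\equiv1\bmod|u|\}|$ (positions start at 1). An infinite word $x$ over $A$ is normal if for every $\ell\ge1$ and every $u\in A^\ell$, $\lim_{n\to\infty}|x[1..n]|^{al}_u/(n/\ell)=|A|^{-\ell}$. *)

(* Defs.v *)
From Stdlib Require Import Reals Arith List Bool.
Import ListNotations.
Open Scope R_scope.

(* An infinite word over {0,1} is x : nat -> bool, 0-indexed:
   x k is the letter a_{k+1} (the paper indexes positions from 1). *)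
Definition word := nat -> bool.

(* even(x) = a_2 a_4 a_6 ...; its k-th letter (0-indexed) is a_{2(k+1)} = x (2k+1). *)
Definition even_word (x : word) : word := fun k => x (2 * k + 1)%nat.

(* |x[1..n]|^{al}_u : number of positions i in 1..n with i = 1 mod |u|
   and x[i..i+|u|-1] = u, the occurrence lying inside x[1..n].
   Writing i = k*|u| + 1 (0-indexed start k*|u|), these are k < n / |u|. *)
Definition aligned_occ (x : word) (u : list bool) (n : nat) : nat :=
  let l := length u in
  length (filter
    (fun k => forallb (fun j => Bool.eqb (x (k * l + j)%nat) (nth j u false))
                      (seq 0 l))
    (seq 0 (n / l))).

Definition normal (x : word) : Prop :=
  forall (l : nat) (u : list bool), (1 <= l)%nat -> length u = l ->
    Un_cv (fun n => INR (aligned_occ x u n) / (INR n / INR l)) (/ 2 ^ l).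

(* Main.v *)
Require Import Defs.
From Stdlib Require Import Reals Arith List Bool Lia Lra.
Import ListNotations.
Open Scope nat_scope.

Fixpoint v2f (f n : nat) : nat :=
  match f with
  | 0 => 0
  | S f' => if Nat.eqb n 0 then 0 else if Nat.even n then S (v2f f' (Nat.div2 n)) else 0
  end.
Definition val2 (n : nat) : nat := v2f n n.

Lemma v2f_spec : forall f n, 0 < n -> n <= f ->
  exists o, Nat.odd o = true /\ n = 2 ^ (v2f f n) * o.
Proof.
  induction f as [|f IH]; intros n Hn Hf; [lia|].
  simpl. destruct (Nat.eqb_spec n 0) as [->|Hn0]; [lia|].
  destruct (Nat.even n) eqn:He.
  - assert (Hd : n = 2 * Nat.div2 n). { rewrite (Nat.div2_odd n) at 1.
      rewrite <- Nat.negb_even, He. simpl. lia. }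
    destruct (IH (Nat.div2 n)) as [o [Ho Heq]]; try lia.
    exists o. split; auto. rewrite Nat.pow_succ_r'. lia.
  - exists n. split. rewrite <- Nat.negb_even, He; auto. simpl; lia.
Qed.

Lemma val2_spec : forall n, 0 < n -> exists o, Nat.odd o = true /\ n = 2 ^ (val2 n) * o.
Proof. intros n Hn. apply v2f_spec; lia. Qed.

Lemma odd_double : forall x, Nat.odd (2 * x) = false.
Proof. intros x. rewrite <- Nat.negb_even, Nat.even_mul. reflexivity. Qed.

Lemma pow2_odd_unique : forall a b o o', Nat.odd o = true -> Nat.odd o' = true ->
  2 ^ a * o = 2 ^ b * o' -> a = b /\ o = o'.
Proof.
  induction a as [|a IH]; intros b o o' Ho Ho' H.
  - destruct b as [|b]. rewrite Nat.pow_0_r in H. split; lia.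
    exfalso. rewrite Nat.pow_succ_r', Nat.pow_0_r in H.
    assert (o = 2 * (2^b * o')) by lia. subst o. rewrite odd_double in Ho. discriminate.
  - destruct b as [|b].
    + exfalso. rewrite Nat.pow_succ_r', Nat.pow_0_r in H.
      assert (o' = 2 * (2^a * o)) by lia. subst o'. rewrite odd_double in Ho'. discriminate.
    + rewrite !Nat.pow_succ_r' in H.
      destruct (IH b o o') as [-> ->]; auto; lia.
Qed.

Lemma val2_unique : forall n v o, Nat.odd o = true -> n = 2 ^ v * o -> val2 n = v.
Proof.
  intros n v o Ho Hn.
  assert (0 < n). { subst. assert (o <> 0) by (intro; subst; discriminate).
    assert (2^v <> 0) by (apply Nat.pow_nonzero; lia). nia. }
  destruct (val2_spec n H) as [o' [Ho' E]].
  destruct (pow2_odd_unique (val2 n) v o' o) as [? _]; auto; congruence.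
Qed.

Definition g (t : nat) : nat := Nat.log2 (Nat.log2 t).
Definition BB (j : nat) : nat := j * 2 ^ (j + 1).
Definition EE (j : nat) : nat := BB j + (j + 1) * 2 ^ j.
Definition Qo (o : nat) : nat :=
  let j := g (Nat.log2 o) in BB j + (j + 1) * (o mod 2 ^ j).
Definition Fbit (n : nat) : bool :=
  let v := val2 n in Nat.testbit (n / 2 ^ v) (Qo (n / 2 ^ v)).
Definition xw (p : nat) : bool := Fbit (S p).

Lemma xw_even : forall k, xw k = xw (2 * k + 1).
Proof.
  intros k. unfold xw, Fbit.
  destruct (val2_spec (S k)) as [o [Ho E]]; [lia|].
  assert (E2 : S (2 * k + 1) = 2 ^ (S (val2 (S k))) * o).
  { rewrite Nat.pow_succ_r'. lia. }
  rewrite (val2_unique _ _ _ Ho E2).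
  assert (D1 : S k / 2 ^ val2 (S k) = o).
  { rewrite E at 1. rewrite Nat.mul_comm, Nat.div_mul; auto. apply Nat.pow_nonzero; lia. }
  assert (D2 : S (2*k+1) / 2 ^ S (val2 (S k)) = o).
  { rewrite E2 at 1. rewrite Nat.mul_comm, Nat.div_mul; auto. apply Nat.pow_nonzero; lia. }
  rewrite D1, D2. reflexivity.
Qed.

Definition cnt (p : nat -> bool) (a n : nat) : nat := length (filter p (seq a n)).

Lemma cnt_add : forall p a n m, cnt p a (n + m) = cnt p a n + cnt p (a + n) m.
Proof. intros. unfold cnt. rewrite seq_app, filter_app, length_app. reflexivity. Qed.

Lemma cnt_S : forall p a n, cnt p a (S n) = cnt p a n + (if p (a + n) then 1 else 0).
Proof. intros. replace (S n) with (n + 1) by lia. rewrite cnt_add. unfold cnt at 2. simpl.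
  destruct (p (a+n)); reflexivity. Qed.

Lemma cnt_0 : forall p a, cnt p a 0 = 0.
Proof. reflexivity. Qed.

Lemma cnt_le : forall p a n, cnt p a n <= n.
Proof. intros. unfold cnt. rewrite <- (length_seq n a) at 2. apply filter_length_le. Qed.

Lemma cnt_ext : forall p q a n, (forall i, a <= i < a + n -> p i = q i) -> cnt p a n = cnt q a n.
Proof.
  intros p q a n H. induction n. reflexivity.
  rewrite !cnt_S, IHn by (intros; apply H; lia). rewrite H by lia. reflexivity.
Qed.

Lemma cnt_mono : forall p q a n, (forall i, a <= i < a + n -> p i = true -> q i = true) ->
  cnt p a n <= cnt q a n.
Proof.
  intros p q a n H. induction n. apply le_n.
  rewrite !cnt_S.
  assert (IH : cnt p a n <= cnt q a n) by (apply IHn; intros; apply H; auto; lia).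
  specialize (H (a + n)).
  destruct (p (a+n)), (q (a+n)); try lia.
Qed.

Lemma cnt_compl : forall p a n, cnt p a n + cnt (fun i => negb (p i)) a n = n.
Proof. intros. unfold cnt. rewrite filter_length. apply length_seq. Qed.

Lemma cnt_or : forall p q a n, cnt (fun i => p i || q i) a n <= cnt p a n + cnt q a n.
Proof.
  intros. induction n. apply le_n. rewrite !cnt_S. destruct (p (a+n)), (q (a+n)); simpl; lia.
Qed.

Lemma cnt_shift : forall p a n, cnt p a n = cnt (fun i => p (a + i)) 0 n.
Proof. intros. induction n. reflexivity. rewrite !cnt_S, IHn. reflexivity. Qed.

Lemma cnt_false : forall a n, cnt (fun _ => false) a n = 0.
Proof. intros. induction n; auto. rewrite cnt_S, IHn. reflexivity. Qed.

Lemma cnt_inj : forall (phi : nat -> nat) (P : nat -> bool) N M,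
  (forall i j, i < N -> j < N -> phi i = phi j -> i = j) ->
  (forall i, i < N -> phi i < M) ->
  cnt (fun i => P (phi i)) 0 N <= cnt P 0 M.
Proof.
  intros phi P N M Hinj Hb. unfold cnt.
  rewrite <- (length_map phi).
  apply NoDup_incl_length.
  - apply NoDup_map_NoDup_ForallPairs.
    + intros i j Hi Hj. apply filter_In in Hi as [Hi _]. apply filter_In in Hj as [Hj _].
      apply in_seq in Hi. apply in_seq in Hj.
      apply Hinj; lia.
    + apply NoDup_filter, seq_NoDup.
  - intros y Hy. apply in_map_iff in Hy as [i [<- Hi]].
    apply filter_In in Hi as [Hi Hp]. apply in_seq in Hi.
    apply filter_In. split; auto. apply in_seq. specialize (Hb i). lia.
Qed.

Lemma cnt_bij : forall (phi : nat -> nat) (P : nat -> bool) N,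
  (forall i j, i < N -> j < N -> phi i = phi j -> i = j) ->
  (forall i, i < N -> phi i < N) ->
  cnt (fun i => P (phi i)) 0 N = cnt P 0 N.
Proof.
  intros phi P N Hinj Hb.
  pose proof (cnt_inj phi P N N Hinj Hb).
  pose proof (cnt_inj phi (fun y => negb (P y)) N N Hinj Hb).
  pose proof (cnt_compl (fun i => P (phi i)) 0 N).
  pose proof (cnt_compl P 0 N). simpl in *. lia.
Qed.

Fixpoint sumf (F : nat -> nat) (n : nat) : nat :=
  match n with 0 => 0 | S n' => sumf F n' + F n' end.

Lemma sumf_ext : forall F G n, (forall i, i < n -> F i = G i) -> sumf F n = sumf G n.
Proof. intros F G n H. induction n; simpl; auto. rewrite IHn, H; auto. Qed.

Lemma sumf_le : forall F G n, (forall i, i < n -> F i <= G i) -> sumf F n <= sumf G n.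
Proof. intros F G n H. induction n; simpl; auto. specialize (IHn (fun i Hi => H i (Nat.lt_lt_succ_r _ _ Hi))).
  specialize (H n). lia. Qed.

Lemma sumf_plus : forall F G n, sumf (fun i => F i + G i) n = sumf F n + sumf G n.
Proof. intros. induction n; simpl; auto. rewrite IHn. lia. Qed.

Lemma sumf_const : forall c n, sumf (fun _ => c) n = n * c.
Proof. intros. induction n; simpl; auto. rewrite IHn. lia. Qed.

Lemma sumf_swap : forall (F : nat -> nat -> nat) n m,
  sumf (fun i => sumf (fun j => F i j) m) n = sumf (fun j => sumf (fun i => F i j) n) m.
Proof.
  intros F n m. induction n; simpl.
  - induction m; simpl; auto. rewrite <- IHm. reflexivity.
  - rewrite IHn. rewrite <- sumf_plus. apply sumf_ext. intros; reflexivity.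
Qed.

Lemma cnt_sumf : forall p a n, cnt p a n = sumf (fun i => if p (a + i) then 1 else 0) n.
Proof. intros. induction n. reflexivity. rewrite cnt_S, IHn. reflexivity. Qed.

Lemma cnt_chunk : forall p a T M,
  cnt p a (M * T) = sumf (fun t => cnt (fun q => p (a + t + q * T)) 0 M) T.
Proof.
  intros p a T M.
  assert (E : cnt p a (M * T) = sumf (fun q => sumf (fun t => if p (a + t + q * T) then 1 else 0) T) M).
  { induction M. reflexivity.
    replace (S M * T) with (M * T + T) by lia. rewrite cnt_add, IHM. simpl.
    f_equal. rewrite cnt_sumf. apply sumf_ext. intros i Hi.
    replace (a + M * T + i) with (a + i + M * T) by lia. reflexivity. }
  rewrite E, sumf_swap. apply sumf_ext. intros t Ht. rewrite cnt_sumf. reflexivity.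
Qed.

Lemma cnt_exists : forall (p : nat -> nat -> bool) a n l,
  cnt (fun k => existsb (fun i => p i k) (seq 0 l)) a n <= sumf (fun i => cnt (p i) a n) l.
Proof.
  intros p a n l. induction l.
  - simpl. rewrite cnt_false; lia.
  - change (sumf (fun i => cnt (p i) a n) (S l)) with (sumf (fun i => cnt (p i) a n) l + cnt (p l) a n).
    eapply Nat.le_trans; [|apply Nat.add_le_mono_r; exact IHl].
    eapply Nat.le_trans; [|apply cnt_or].
    apply cnt_mono. intros i _ H. rewrite seq_S, existsb_app in H. simpl in H.
    rewrite orb_false_r in H. exact H.
Qed.

Lemma pow2_pos : forall k, 0 < 2 ^ k.
Proof. intros. apply Nat.neq_0_lt_0, Nat.pow_nonzero. lia. Qed.

Lemma divide_pow2_odd : forall S x d, Nat.odd d = true -> Nat.divide (2 ^ S) (x * d) -> Nat.divide (2 ^ S) x.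
Proof.
  induction S as [|S IH]; intros x d Hd H.
  - simpl. apply Nat.divide_1_l.
  - assert (Hx : Nat.even x = true).
    { assert (Nat.divide 2 (x * d)).
      { eapply Nat.divide_trans; [|exact H]. rewrite Nat.pow_succ_r'. apply Nat.divide_factor_l. }
      destruct H0 as [z Hz].
      assert (Nat.even (x * d) = true) by (rewrite Hz, Nat.even_mul, Nat.even_2, orb_true_r; reflexivity).
      assert (Hed : Nat.even d = false) by (rewrite <- Nat.negb_odd, Hd; reflexivity).
      rewrite Nat.even_mul, Hed, orb_false_r in H0. exact H0. }
    apply Nat.even_spec in Hx as [y ->].
    rewrite Nat.pow_succ_r'. apply Nat.mul_divide_mono_l.
    apply (IH y d Hd). rewrite Nat.pow_succ_r' in H. rewrite <- Nat.mul_assoc in H.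
    apply Nat.mul_divide_cancel_l in H; auto.
Qed.

Lemma mod_add_zero : forall X Y M, 0 < M -> (X + Y) mod M = X mod M -> Y mod M = 0.
Proof.
  intros X Y M HM H.
  rewrite Nat.Div0.add_mod in H.
  pose proof (Nat.mod_upper_bound X M ltac:(lia)).
  pose proof (Nat.mod_upper_bound Y M ltac:(lia)).
  set (r := X mod M) in *. set (y := Y mod M) in *.
  destruct (Nat.lt_ge_cases (r + y) M).
  - rewrite Nat.mod_small in H by lia. lia.
  - replace (r + y) with ((r + y - M) + 1 * M) in H by lia.
    rewrite Nat.Div0.mod_add, Nat.mod_small in H by lia. lia.
Qed.

Lemma mod_inj_odd : forall S a d q1 q2, Nat.odd d = true -> q1 < 2 ^ S -> q2 < 2 ^ S ->
  (a + q1 * d) mod 2 ^ S = (a + q2 * d) mod 2 ^ S -> q1 = q2.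
Proof.
  intros S a d q1 q2 Hd H1 H2 H.
  assert (forall u v, u < v -> v < 2 ^ S -> (a + u * d) mod 2 ^ S = (a + v * d) mod 2 ^ S -> False).
  { intros u v Huv Hv E.
    replace (a + v * d) with ((a + u * d) + (v - u) * d) in E by nia.
    symmetry in E. apply mod_add_zero in E; [|apply pow2_pos].
    apply Nat.Lcm0.mod_divide in E. apply divide_pow2_odd in E; auto.
    apply Nat.divide_pos_le in E; lia. }
  destruct (Nat.lt_trichotomy q1 q2) as [?|[?|?]]; auto.
  exfalso; eauto. exfalso; eauto.
Qed.

Lemma chunk_le : forall S a d P N, Nat.odd d = true -> N <= 2 ^ S ->
  cnt (fun q => P ((a + q * d) mod 2 ^ S)) 0 N <= cnt P 0 (2 ^ S).
Proof.
  intros. apply (cnt_inj (fun q => (a + q * d) mod 2 ^ S)).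
  - intros i j Hi Hj E. eapply mod_inj_odd; eauto; lia.
  - intros. apply Nat.mod_upper_bound. pose proof (pow2_pos S); lia.
Qed.

Lemma chunk_eq : forall S a d P, Nat.odd d = true ->
  cnt (fun q => P ((a + q * d) mod 2 ^ S)) 0 (2 ^ S) = cnt P 0 (2 ^ S).
Proof.
  intros. pose proof (chunk_le S a d P (2^S) H (le_n _)).
  pose proof (chunk_le S a d (fun y => negb (P y)) (2^S) H (le_n _)).
  pose proof (cnt_compl (fun q => P ((a + q * d) mod 2 ^ S)) 0 (2^S)).
  pose proof (cnt_compl P 0 (2^S)). simpl in *. lia.
Qed.

Lemma chunk_gen : forall S d P N a, Nat.odd d = true ->
  cnt (fun q => P ((a + q * d) mod 2 ^ S)) 0 N <= (N / 2 ^ S + 1) * cnt P 0 (2 ^ S).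
Proof.
  intros S d P N. pose proof (pow2_pos S) as HS.
  induction N as [N IH] using (well_founded_induction lt_wf). intros a Hd.
  destruct (Nat.lt_ge_cases N (2 ^ S)).
  - rewrite Nat.div_small by auto. simpl. rewrite Nat.add_0_r. apply chunk_le; auto; lia.
  - replace N with (2 ^ S + (N - 2 ^ S)) at 1 by lia. rewrite cnt_add.
    pose proof (chunk_le S a d P (2 ^ S) Hd (le_n _)) as H1.
    rewrite (cnt_shift _ (0 + 2 ^ S)).
    rewrite (cnt_ext _ (fun q => P (((a + 2 ^ S * d) + q * d) mod 2 ^ S)) 0 (N - 2 ^ S)).
    2:{ intros i _. f_equal. f_equal. nia. }
    pose proof (IH (N - 2 ^ S) ltac:(lia) (a + 2 ^ S * d) Hd) as H2.
    assert (E : N / 2 ^ S = (N - 2 ^ S) / 2 ^ S + 1).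
    { replace N with ((N - 2 ^ S) + 1 * 2 ^ S) at 1 by lia. rewrite Nat.div_add by lia. lia. }
    rewrite E. nia.
Qed.

Lemma cnt_split : forall (p q : nat -> bool) a n,
  cnt q a n = cnt (fun y => p y && q y) a n + cnt (fun y => negb (p y) && q y) a n.
Proof.
  intros. induction n. reflexivity. rewrite !cnt_S, IHn.
  destruct (p (a + n)), (q (a + n)); simpl; lia.
Qed.

Definition flip (p y : nat) := Nat.lxor y (2 ^ p).

Lemma flip_bits : forall p y q, Nat.testbit (flip p y) q = xorb (Nat.testbit y q) (Nat.eqb p q).
Proof. intros. unfold flip. rewrite Nat.lxor_spec, Nat.pow2_bits_eqb. reflexivity. Qed.

Lemma flip_flip : forall p y, flip p (flip p y) = y.
Proof. intros. apply Nat.bits_inj. intros q. rewrite !flip_bits. destruct (Nat.testbit y q), (p =? q); reflexivity. Qed.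

Lemma lt_pow2_bits : forall y S q, y < 2 ^ S -> S <= q -> Nat.testbit y q = false.
Proof. intros. rewrite <- (Nat.mod_small y (2^S)) by auto. apply Nat.mod_pow2_bits_high; auto. Qed.

Lemma flip_lt : forall p y S, p < S -> y < 2 ^ S -> flip p y < 2 ^ S.
Proof.
  intros p y S Hp Hy.
  assert (E : flip p y = flip p y mod 2 ^ S).
  { apply Nat.bits_inj. intros q. destruct (Nat.lt_ge_cases q S).
    - rewrite Nat.mod_pow2_bits_low; auto.
    - rewrite Nat.mod_pow2_bits_high, flip_bits, lt_pow2_bits with (S := S) by auto.
      destruct (Nat.eqb_spec p q); auto; lia. }
  rewrite E. apply Nat.mod_upper_bound. pose proof (pow2_pos S); lia.
Qed.

Definition patb (L : list nat) (ps : nat -> nat) (bs : nat -> bool) (y : nat) : bool :=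
  forallb (fun i => Bool.eqb (Nat.testbit y (ps i)) (bs i)) L.

Lemma patb_flip : forall L ps bs p y, ~ In p (map ps L) -> patb L ps bs (flip p y) = patb L ps bs y.
Proof.
  induction L as [|i L IH]; intros ps bs p y Hn; simpl; auto.
  rewrite IH by (intro; apply Hn; simpl; auto). rewrite flip_bits.
  destruct (Nat.eqb_spec p (ps i)). exfalso; apply Hn; simpl; auto.
  rewrite xorb_false_r. reflexivity.
Qed.

Lemma nodup_len_le : forall (L : list nat) S, NoDup L -> (forall x, In x L -> x < S) -> length L <= S.
Proof.
  intros. rewrite <- (length_seq S 0). apply NoDup_incl_length; auto.
  intros x Hx. apply in_seq. specialize (H0 x Hx). lia.
Qed.

Lemma pat_count : forall L ps bs S, NoDup (map ps L) -> (forall i, In i L -> ps i < S) ->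
  cnt (patb L ps bs) 0 (2 ^ S) = 2 ^ (S - length L).
Proof.
  induction L as [|i L IH]; intros ps bs S Hnd Hb.
  - simpl. rewrite Nat.sub_0_r. unfold patb. simpl. unfold cnt. rewrite filter_true. apply length_seq.
  - simpl in Hnd. inversion Hnd as [|? ? Hni Hnd']; subst.
    assert (Hlen : length (i :: L) <= S).
    { rewrite <- (length_map ps). apply nodup_len_le; auto. intros x Hx.
      apply in_map_iff in Hx as [j [<- Hj]]. apply Hb; auto. }
    simpl in Hlen.
    set (p := ps i). set (b := bs i).
    assert (IHc := IH ps bs S Hnd' ltac:(intros; apply Hb; simpl; auto)).
    pose proof (cnt_compl (fun y => Bool.eqb (Nat.testbit y p) b) 0 (2^S)).
    assert (Esplit : cnt (patb L ps bs) 0 (2^S) =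
       cnt (fun y => Bool.eqb (Nat.testbit y p) b && patb L ps bs y) 0 (2^S) +
       cnt (fun y => negb (Bool.eqb (Nat.testbit y p) b) && patb L ps bs y) 0 (2^S)).
    { apply cnt_split. }
    assert (Esym : cnt (fun y => Bool.eqb (Nat.testbit y p) b && patb L ps bs y) 0 (2^S) =
       cnt (fun y => negb (Bool.eqb (Nat.testbit y p) b) && patb L ps bs y) 0 (2^S)).
    { rewrite <- (cnt_bij (flip p)).
      - apply cnt_ext. intros y _. rewrite patb_flip by auto. rewrite flip_bits, Nat.eqb_refl.
        destruct (Nat.testbit y p), b; reflexivity.
      - intros y z Hy Hz E. rewrite <- (flip_flip p y), <- (flip_flip p z), E. reflexivity.
      - intros. apply flip_lt; auto. apply Hb. simpl; auto. }
    change (cnt (fun y => Bool.eqb (Nat.testbit y p) b && patb L ps bs y) 0 (2^S) = 2^(S - length (i::L))).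
    assert (E : 2^(S - length L) = 2 * 2^(S - length (i :: L))).
    { rewrite <- Nat.pow_succ_r'. f_equal. simpl. lia. }
    lia.
Qed.

Definition pos (n : nat) : nat := val2 n + Qo (n / 2 ^ val2 n).

Lemma Fbit_pos : forall n, Fbit n = Nat.testbit n (pos n).
Proof. intros. unfold Fbit, pos. rewrite Nat.div_pow2_bits. f_equal. lia. Qed.

Lemma BB_EE : forall j, EE j <= BB (S j).
Proof. intros. unfold EE, BB. replace (S j + 1) with (S (j + 1)) by lia.
  rewrite !Nat.pow_succ_r'. replace (j + 1) with (S j) by lia. rewrite Nat.pow_succ_r'. nia. Qed.

Lemma BB_le_EE : forall j, BB j <= EE j.
Proof. intros. unfold EE. lia. Qed.

Lemma BB_mono : forall i j, i <= j -> BB i <= BB j.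
Proof.
  intros i j H. induction H. lia. pose proof (BB_EE m). pose proof (BB_le_EE m). lia.
Qed.

Lemma window_inj : forall v j r v' j' r', v <= j -> r < 2 ^ j -> v' <= j' -> r' < 2 ^ j' ->
  v + BB j + (j + 1) * r = v' + BB j' + (j' + 1) * r' -> j = j' /\ r = r' /\ v = v'.
Proof.
  intros v j r v' j' r' Hv Hr Hv' Hr' E.
  assert (Hjj : j = j').
  { assert (forall a b ra rb va vb, va <= a -> ra < 2 ^ a -> a < b -> va + BB a + (a + 1) * ra < vb + BB b + (b+1) * rb).
    { intros a b ra rb va vb Ha Hra Hab.
      pose proof (BB_EE a). pose proof (BB_mono (S a) b ltac:(lia)). unfold EE in *. nia. }
    destruct (Nat.lt_trichotomy j j') as [?|[?|?]]; auto.
    - specialize (H j j' r r' v v' Hv Hr H0). lia.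
    - specialize (H j' j r' r v' v Hv' Hr' H0). lia. }
  subst j'. assert (r = r') by nia. subst. split; auto. split; auto. lia.
Qed.

Lemma existsb_negb_forallb : forall (P : nat -> bool) L,
  negb (forallb (fun i => negb (P i)) L) = existsb P L.
Proof. induction L; simpl; auto. rewrite negb_andb, negb_involutive, IHL. reflexivity. Qed.

Lemma pow_le_mono_r2 : forall a b, a <= b -> 2 ^ a <= 2 ^ b.
Proof. intros. apply Nat.pow_le_mono_r; lia. Qed.

Lemma pow2_split : forall a b, a <= b -> 2 ^ b = 2 ^ a * 2 ^ (b - a).
Proof. intros. rewrite <- Nat.pow_add_r. f_equal. lia. Qed.

Lemma forallb_ext_in : forall (f h : nat -> bool) L, (forall x, In x L -> f x = h x) -> forallb f L = forallb h L.
Proof. induction L; simpl; intros; auto. rewrite H, IHL; auto. Qed.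

Lemma sumf_mul : forall F n c, sumf F n * c = sumf (fun i => F i * c) n.
Proof. intros. induction n; simpl; auto. rewrite <- IHn. lia. Qed.

Definition fblock (x : nat -> bool) (u : list bool) (l k : nat) : bool :=
  forallb (fun j => Bool.eqb (x (k * l + j)) (nth j u false)) (seq 0 l).

Section Analysis.
Variables (l m c beta Sw s l' : nat) (u : list bool).
Hypothesis Hl : 1 <= l.
Hypothesis Hls : l = 2 ^ s * l'.
Hypothesis Hl' : Nat.odd l' = true.
Hypothesis Hsc : s <= c + 1.
Hypothesis Hcb : c + 1 <= beta.
Hypothesis Hbm : beta <= m.
Hypothesis HlS : l <= Sw.
Hypothesis Hgrp : forall v, v <= c -> c <= g (m - v) /\ l <= 2 ^ g (m - v) /\
  beta <= BB (g (m - v)) /\ v + g (m - v) <= beta /\ EE (g (m - v)) <= beta + Sw.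

Definition good (n : nat) : bool := forallb (fun i => negb ((n + i) mod 2 ^ (c + 1) =? 0)) (seq 0 l).
Definition lvl (n : nat) : Prop := 2 ^ m <= n < 2 ^ (m + 1).

Lemma good_i : forall n i, good n = true -> i < l -> (n + i) mod 2 ^ (c + 1) <> 0.
Proof.
  intros n i H Hi. unfold good in H. rewrite forallb_forall in H.
  specialize (H i ltac:(apply in_seq; lia)). intro E. rewrite E in H. discriminate.
Qed.

Lemma mod_pow2_mul : forall a b X, a <= b -> (2 ^ b * X) mod 2 ^ a = 0.
Proof.
  intros. rewrite (pow2_split a b) by auto. rewrite <- Nat.mul_assoc, Nat.mul_comm.
  apply Nat.Div0.mod_mul.
Qed.

Lemma good_nocarry : forall n w i, good n = true -> c + 1 <= w -> i < l -> n mod 2 ^ w + i < 2 ^ w.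
Proof.
  intros n w i Hg Hw Hi. destruct (Nat.lt_ge_cases (n mod 2 ^ w + i) (2 ^ w)); auto. exfalso.
  set (i' := 2 ^ w - n mod 2 ^ w).
  pose proof (Nat.mod_upper_bound n (2^w) ltac:(pose proof (pow2_pos w); lia)).
  apply (good_i n i' Hg); [lia|].
  replace (n + i') with (2 ^ w * (n / 2 ^ w + 1)).
  - apply mod_pow2_mul; auto.
  - pose proof (Nat.div_mod n (2^w) ltac:(pose proof (pow2_pos w); lia)). unfold i'. nia.
Qed.

Lemma decomp : forall n i, good n = true -> lvl n -> i < l ->
  n + i = 2 ^ val2 (n + i) * ((n + i) / 2 ^ val2 (n + i)) /\
  Nat.odd ((n + i) / 2 ^ val2 (n + i)) = true /\ val2 (n + i) <= c /\
  Nat.log2 ((n + i) / 2 ^ val2 (n + i)) = m - val2 (n + i) /\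
  pos (n + i) = val2 (n + i) + BB (g (m - val2 (n + i))) +
     (g (m - val2 (n + i)) + 1) * (((n + i) / 2 ^ val2 (n + i)) mod 2 ^ g (m - val2 (n + i))).
Proof.
  intros n i Hg Hlv Hi.
  destruct (val2_spec (n + i)) as [o [Ho E]]; [unfold lvl in Hlv; pose proof (pow2_pos m); lia|].
  set (v := val2 (n + i)) in *.
  assert (Hdiv : (n + i) / 2 ^ v = o).
  { rewrite E, Nat.mul_comm, Nat.div_mul; auto. pose proof (pow2_pos v); lia. }
  rewrite Hdiv.
  assert (Hv : v <= c).
  { destruct (Nat.le_gt_cases v c); auto. exfalso. apply (good_i n i Hg Hi).
    rewrite E. apply mod_pow2_mul. lia. }
  assert (Hlog : Nat.log2 o = m - v).
  { assert (Hy : n + i < 2 ^ (m + 1)).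
    { pose proof (good_nocarry n (m + 1) i Hg ltac:(lia) Hi). unfold lvl in Hlv.
      rewrite Nat.mod_small in H by lia. lia. }
    assert (Hly : Nat.log2 (n + i) = m).
    { apply Nat.log2_unique; [lia|]. unfold lvl in Hlv. replace (Datatypes.S m) with (m + 1) by lia. lia. }
    assert (Ho0 : 0 < o). { destruct o; [discriminate|lia]. }
    rewrite E, Nat.mul_comm, Nat.log2_mul_pow2 in Hly by lia. lia. }
  split; [exact E|]. split; auto. split; auto. split; auto.
  unfold pos. fold v. rewrite Hdiv. unfold Qo. rewrite Hlog. lia.
Qed.

Lemma pos_range : forall n i, good n = true -> lvl n -> i < l -> beta <= pos (n + i) < beta + Sw.
Proof.
  intros n i Hg Hlv Hi. destruct (decomp n i Hg Hlv Hi) as [_ [_ [Hv [_ Hp]]]].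
  rewrite Hp. set (v := val2 (n + i)) in *. set (o := (n + i) / 2 ^ v).
  destruct (Hgrp v Hv) as [Hc [_ [Hb [_ He]]]]. set (j := g (m - v)) in *.
  pose proof (Nat.mod_upper_bound o (2 ^ j) ltac:(pose proof (pow2_pos j); lia)).
  unfold EE in He. nia.
Qed.

Lemma pos_inj : forall n i i', good n = true -> lvl n -> i < l -> i' < l ->
  pos (n + i) = pos (n + i') -> i = i'.
Proof.
  intros n.
  assert (W : forall i i', good n = true -> lvl n -> i < i' -> i' < l -> pos (n + i) = pos (n + i') -> False).
  { intros i i' Hg Hlv Hii Hi' Ep.
    destruct (decomp n i Hg Hlv ltac:(lia)) as [E1 [O1 [V1 [_ P1]]]].
    destruct (decomp n i' Hg Hlv Hi') as [E2 [O2 [V2 [_ P2]]]].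
    set (v := val2 (n + i)) in *. set (v' := val2 (n + i')) in *.
    set (o := (n + i) / 2 ^ v) in *. set (o' := (n + i') / 2 ^ v') in *.
    destruct (Hgrp v V1) as [C1 [L1 _]]. destruct (Hgrp v' V2) as [C2 [L2 _]].
    rewrite P1, P2 in Ep.
    destruct (window_inj v (g (m - v)) (o mod 2 ^ g (m - v)) v' (g (m - v')) (o' mod 2 ^ g (m - v'))) as [Ej [Er Ev]]; auto; try lia.
    - apply Nat.mod_upper_bound. pose proof (pow2_pos (g (m - v))); lia.
    - apply Nat.mod_upper_bound. pose proof (pow2_pos (g (m - v'))); lia.
    - rewrite <- Ev in *. try rewrite <- Ej in Er. set (j := g (m - v)) in *.
      assert (Hoo : o < o').
      { destruct (Nat.lt_ge_cases o o'); auto. pose proof (pow2_pos v). nia. }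
      pose proof (Nat.div_mod o (2 ^ j) ltac:(pose proof (pow2_pos j); lia)).
      pose proof (Nat.div_mod o' (2 ^ j) ltac:(pose proof (pow2_pos j); lia)).
      assert (o / 2 ^ j < o' / 2 ^ j) by nia.
      assert (o' - o >= 2 ^ j) by nia.
      pose proof (pow2_pos v). nia. }
  intros i i' Hg Hlv Hi Hi' Ep.
  destruct (Nat.lt_trichotomy i i') as [?|[?|?]]; auto.
  - exfalso; eapply W; eauto.
  - exfalso; eapply (W i' i); eauto.
Qed.

Lemma good_shift : forall n q, good (n + q * 2 ^ beta) = good n.
Proof.
  intros. unfold good. apply forallb_ext_in. intros i _. f_equal. f_equal.
  replace (n + q * 2 ^ beta + i) with ((n + i) + (q * 2 ^ (beta - (c + 1))) * 2 ^ (c + 1)).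
  - apply Nat.Div0.mod_add.
  - rewrite (pow2_split (c + 1) beta) by lia. nia.
Qed.

Lemma pos_shift : forall n q i, good n = true -> lvl n -> lvl (n + q * 2 ^ beta) -> i < l ->
  pos (n + q * 2 ^ beta + i) = pos (n + i).
Proof.
  intros n q i Hg Hlv Hlv' Hi.
  assert (Hg' : good (n + q * 2 ^ beta) = true) by (rewrite good_shift; auto).
  destruct (decomp n i Hg Hlv Hi) as [E1 [O1 [V1 [_ P1]]]].
  destruct (decomp _ i Hg' Hlv' Hi) as [E2 [O2 [V2 [_ P2]]]].
  set (v := val2 (n + i)) in *. set (o := (n + i) / 2 ^ v) in *.
  destruct (Hgrp v V1) as [_ [_ [_ [Hvj _]]]].
  set (o'' := o + q * 2 ^ (beta - v)).
  assert (Ey : n + q * 2 ^ beta + i = 2 ^ v * o'').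
  { unfold o''. rewrite (pow2_split v beta) by lia. nia. }
  assert (Oo : Nat.odd o'' = true).
  { unfold o''. replace (beta - v) with (Datatypes.S (beta - v - 1)) by lia. rewrite Nat.pow_succ_r'.
    rewrite Nat.odd_add, O1. replace (q * (2 * 2 ^ (beta - v - 1))) with (2 * (q * 2 ^ (beta - v - 1))) by lia.
    rewrite odd_double. reflexivity. }
  assert (Ev : val2 (n + q * 2 ^ beta + i) = v) by (eapply val2_unique; eauto).
  rewrite P2, P1. rewrite Ev.
  assert (Eo : (n + q * 2 ^ beta + i) / 2 ^ v = o'').
  { rewrite Ey, Nat.mul_comm, Nat.div_mul; auto. pose proof (pow2_pos v); lia. }
  rewrite Eo. f_equal. f_equal. unfold o''.
  set (j := g (m - v)) in *.
  replace (q * 2 ^ (beta - v)) with ((q * 2 ^ (beta - v - j)) * 2 ^ j).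
  - rewrite Nat.Div0.mod_add. reflexivity.
  - rewrite (pow2_split j (beta - v)) by lia. replace (beta - v - j) with (beta - v - j) by lia. nia.
Qed.

Lemma Fbit_block : forall n i, good n = true -> lvl n -> i < l ->
  Fbit (n + i) = Nat.testbit ((n / 2 ^ beta) mod 2 ^ Sw) (pos (n + i) - beta).
Proof.
  intros n i Hg Hlv Hi. rewrite Fbit_pos.
  destruct (pos_range n i Hg Hlv Hi) as [R1 R2].
  rewrite Nat.mod_pow2_bits_low by lia. rewrite Nat.div_pow2_bits.
  replace (pos (n + i) - beta + beta) with (pos (n + i)) by lia.
  assert (Ed : (n + i) / 2 ^ beta = n / 2 ^ beta).
  { pose proof (good_nocarry n beta i Hg ltac:(lia) Hi).
    pose proof (pow2_pos beta).
    rewrite (Nat.div_mod n (2 ^ beta)) at 1 by lia.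
    rewrite <- Nat.add_assoc, Nat.add_comm, Nat.mul_comm, Nat.div_add by lia.
    rewrite Nat.div_small by lia. lia. }
  replace (pos (n + i)) with ((pos (n + i) - beta) + beta) by lia.
  rewrite <- !Nat.div_pow2_bits, Ed. reflexivity.
Qed.

Hypothesis Hu : length u = l.

Definition badk (k : nat) : bool := negb (good (k * l + 1)).
Definition T := 2 ^ (beta - s).

Lemma Tl : T * l = 2 ^ beta * l'.
Proof. unfold T. rewrite Hls, (pow2_split s beta) by lia. nia. Qed.

Lemma block_pat : forall k, good (k * l + 1) = true -> lvl (k * l + 1) ->
  fblock xw u l k = patb (seq 0 l) (fun i => pos (k * l + 1 + i) - beta) (fun i => nth i u false)
     (((k * l + 1) / 2 ^ beta) mod 2 ^ Sw).
Proof.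
  intros k Hg Hlv. unfold fblock, patb. apply forallb_ext_in. intros i Hi. apply in_seq in Hi.
  unfold xw. replace (Datatypes.S (k * l + i)) with (k * l + 1 + i) by lia.
  rewrite Fbit_block by (auto; lia). reflexivity.
Qed.

Lemma pat_val : forall n, good n = true -> lvl n ->
  cnt (patb (seq 0 l) (fun i => pos (n + i) - beta) (fun i => nth i u false)) 0 (2 ^ Sw) = 2 ^ (Sw - l).
Proof.
  intros n Hg Hlv. rewrite pat_count; [rewrite length_seq; reflexivity| |].
  - apply NoDup_map_NoDup_ForallPairs; [|apply seq_NoDup].
    intros i j Hi Hj E. apply in_seq in Hi. apply in_seq in Hj.
    pose proof (pos_range n i Hg Hlv ltac:(lia)). pose proof (pos_range n j Hg Hlv ltac:(lia)).
    apply (pos_inj n); auto; lia.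
  - intros i Hi. apply in_seq in Hi. pose proof (pos_range n i Hg Hlv ltac:(lia)). lia.
Qed.

Lemma cnt_true : forall a N, cnt (fun _ => true) a N = N.
Proof. intros. pose proof (cnt_compl (fun _ => true) a N). simpl in H. rewrite cnt_false in H. lia. Qed.

Lemma chunk_t : forall k0 t, t < T -> (forall k, k0 <= k < k0 + 2 ^ Sw * T -> lvl (k * l + 1)) ->
  let Ct := cnt (fun q => fblock xw u l (k0 + t + q * T)) 0 (2 ^ Sw) in
  let Bt := cnt (fun q => badk (k0 + t + q * T)) 0 (2 ^ Sw) in
  Ct * 2 ^ l <= 2 ^ Sw + Bt * 2 ^ l /\ 2 ^ Sw <= Ct * 2 ^ l + Bt.
Proof.
  intros k0 t Ht Hlv Ct Bt.
  set (n := (k0 + t) * l + 1).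
  assert (En : forall q, (k0 + t + q * T) * l + 1 = n + (q * l') * 2 ^ beta).
  { intros q. unfold n. pose proof Tl. nia. }
  assert (Hn : lvl n) by (apply Hlv; pose proof (pow2_pos Sw); nia).
  assert (Hnq : forall q, q < 2 ^ Sw -> lvl (n + (q * l') * 2 ^ beta)).
  { intros q Hq. rewrite <- En. apply Hlv. nia. }
  destruct (good n) eqn:Hg.
  - assert (ECt : Ct = 2 ^ (Sw - l)).
    { unfold Ct. rewrite <- (pat_val n Hg Hn).
      rewrite <- (chunk_eq Sw (n / 2 ^ beta) l' (patb (seq 0 l) (fun i => pos (n + i) - beta) (fun i => nth i u false))) by auto.
      apply cnt_ext. intros q Hq. simpl in Hq.
      assert (Hgq : good ((k0 + t + q * T) * l + 1) = true) by (rewrite En, good_shift; auto).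
      rewrite (block_pat _ Hgq) by (rewrite En; apply Hnq; lia).
      rewrite En, Nat.div_add by (pose proof (pow2_pos beta); lia).
      unfold patb. apply forallb_ext_in. intros i Hi. apply in_seq in Hi.
      rewrite pos_shift; auto; try apply Hnq; lia. }
    assert (EBt : Bt = 0).
    { unfold Bt. rewrite (cnt_ext _ (fun _ => false)). apply cnt_false.
      intros q Hq. unfold badk. rewrite En, good_shift, Hg. reflexivity. }
    assert (E2 : 2 ^ (Sw - l) * 2 ^ l = 2 ^ Sw) by (rewrite <- Nat.pow_add_r; f_equal; lia).
    rewrite ECt, EBt, E2. lia.
  - assert (EBt : Bt = 2 ^ Sw).
    { unfold Bt. rewrite (cnt_ext _ (fun _ => true)). apply cnt_true.
      intros q Hq. unfold badk. rewrite En, good_shift, Hg. reflexivity. }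
    assert (Ct <= 2 ^ Sw) by apply cnt_le.
    rewrite EBt. pose proof (pow2_pos l). nia.
Qed.

Lemma chunk_count : forall k0, (forall k, k0 <= k < k0 + 2 ^ Sw * T -> lvl (k * l + 1)) ->
  cnt (fblock xw u l) k0 (2 ^ Sw * T) * 2 ^ l <= 2 ^ Sw * T + cnt badk k0 (2 ^ Sw * T) * 2 ^ l /\
  2 ^ Sw * T <= cnt (fblock xw u l) k0 (2 ^ Sw * T) * 2 ^ l + cnt badk k0 (2 ^ Sw * T).
Proof.
  intros k0 Hlv. rewrite !cnt_chunk, !sumf_mul.
  split.
  - replace (2 ^ Sw * T) with (sumf (fun _ => 2 ^ Sw) T) at 1 by (rewrite sumf_const; lia).
    rewrite <- sumf_plus. apply sumf_le. intros t Ht. apply (chunk_t k0 t Ht Hlv).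
  - replace (2 ^ Sw * T) with (sumf (fun _ => 2 ^ Sw) T) by (rewrite sumf_const; lia).
    rewrite <- sumf_plus. apply sumf_le. intros t Ht. apply (chunk_t k0 t Ht Hlv).
Qed.

Lemma interval_count_aux : forall nc k0 R, R < 2 ^ Sw * T ->
  (forall k, k0 <= k < k0 + (nc * (2 ^ Sw * T) + R) -> lvl (k * l + 1)) ->
  cnt (fblock xw u l) k0 (nc * (2 ^ Sw * T) + R) * 2 ^ l <=
     (nc * (2 ^ Sw * T) + R) + (cnt badk k0 (nc * (2 ^ Sw * T) + R) + 2 ^ Sw * T) * 2 ^ l /\
  nc * (2 ^ Sw * T) + R <=
     cnt (fblock xw u l) k0 (nc * (2 ^ Sw * T) + R) * 2 ^ l + cnt badk k0 (nc * (2 ^ Sw * T) + R) + 2 ^ Sw * T.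
Proof.
  induction nc; intros k0 R HR Hlv.
  - simpl. pose proof (cnt_le (fblock xw u l) k0 R). nia.
  - replace (Datatypes.S nc * (2 ^ Sw * T) + R) with (2 ^ Sw * T + (nc * (2 ^ Sw * T) + R)) by lia.
    rewrite (cnt_add _ k0 (2 ^ Sw * T)), (cnt_add badk k0 (2 ^ Sw * T)).
    destruct (chunk_count k0) as [A1 A2]. { intros k Hk. apply Hlv. lia. }
    destruct (IHnc (k0 + 2 ^ Sw * T) R HR) as [B1 B2]. { intros k Hk. apply Hlv. lia. }
    rewrite !Nat.mul_add_distr_r in *. split; lia.
Qed.

Lemma interval_count : forall k0 N, (forall k, k0 <= k < k0 + N -> lvl (k * l + 1)) ->
  cnt (fblock xw u l) k0 N * 2 ^ l <= N + (cnt badk k0 N + 2 ^ (beta + Sw)) * 2 ^ l /\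
  N <= cnt (fblock xw u l) k0 N * 2 ^ l + cnt badk k0 N + 2 ^ (beta + Sw).
Proof.
  intros k0 N Hlv.
  assert (HL : 0 < 2 ^ Sw * T) by (unfold T; pose proof (pow2_pos Sw); pose proof (pow2_pos (beta - s)); nia).
  assert (HL2 : 2 ^ Sw * T <= 2 ^ (beta + Sw)).
  { unfold T. rewrite <- Nat.pow_add_r. apply pow_le_mono_r2. lia. }
  pose proof (Nat.div_mod N (2 ^ Sw * T) ltac:(lia)).
  pose proof (Nat.mod_upper_bound N (2 ^ Sw * T) ltac:(lia)).
  destruct (interval_count_aux (N / (2 ^ Sw * T)) k0 (N mod (2 ^ Sw * T))) as [A1 A2]; auto.
  - intros k Hk. apply Hlv. nia.
  - replace (N / (2 ^ Sw * T) * (2 ^ Sw * T) + N mod (2 ^ Sw * T)) with N in A1, A2 by lia.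
    rewrite !Nat.mul_add_distr_r in *. pose proof (pow2_pos l). split; nia.
Qed.

Lemma cnt_eq0 : forall M, 0 < M -> cnt (fun y => y =? 0) 0 M = 1.
Proof.
  intros M HM. replace M with (1 + (M - 1)) by lia. rewrite cnt_add.
  rewrite (cnt_ext _ (fun _ => false) (0 + 1)). rewrite cnt_false. reflexivity.
  intros i Hi. destruct i; [lia|reflexivity].
Qed.

Lemma bad_count : forall k0 N, cnt badk k0 N <= l * (N / 2 ^ (c + 1 - s) + 1).
Proof.
  intros k0 N.
  rewrite (cnt_ext _ (fun k => existsb (fun i => (k * l + 1 + i) mod 2 ^ (c + 1) =? 0) (seq 0 l))).
  2:{ intros k _. unfold badk, good. apply existsb_negb_forallb. }
  eapply Nat.le_trans; [apply cnt_exists|].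
  rewrite <- sumf_const. apply sumf_le. intros i Hi.
  set (w := c + 1 - s).
  assert (Ec : 2 ^ (c + 1) = 2 ^ s * 2 ^ w) by (unfold w; apply pow2_split; lia).
  rewrite cnt_shift.
  set (A := k0 * l + 1 + i).
  assert (EA : forall q, (k0 + q) * l + 1 + i = A + q * (2 ^ s * l')).
  { intros q. unfold A. rewrite <- Hls. nia. }
  destruct (Nat.eq_dec (A mod 2 ^ s) 0) as [HA|HA].
  - set (e := A / 2 ^ s).
    assert (Ae : A = 2 ^ s * e) by (unfold e; pose proof (Nat.div_mod A (2 ^ s) ltac:(pose proof (pow2_pos s); lia)); lia).
    rewrite (cnt_ext _ (fun q => (fun y => y =? 0) ((e + q * l') mod 2 ^ w))).
    + pose proof (chunk_gen w l' (fun y => y =? 0) N e Hl').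
      rewrite cnt_eq0 in H by apply pow2_pos. lia.
    + intros q _. simpl. rewrite EA, Ae, Ec.
      replace (2 ^ s * e + q * (2 ^ s * l')) with (2 ^ s * (e + q * l')) by nia.
      rewrite Nat.Div0.mul_mod_distr_l.
      pose proof (pow2_pos s).
      destruct ((e + q * l') mod 2 ^ w) eqn:Z; simpl.
      * rewrite Nat.mul_0_r. reflexivity.
      * apply Nat.eqb_neq. nia.
  - rewrite (cnt_ext _ (fun _ => false)). rewrite cnt_false; lia.
    intros q _. apply Nat.eqb_neq. rewrite EA. intro Z. apply HA.
    rewrite Ec in Z.
    assert (Z2 : (A + q * (2 ^ s * l')) mod 2 ^ s = 0).
    { apply Nat.Lcm0.mod_divide in Z. apply Nat.Lcm0.mod_divide.
      eapply Nat.divide_trans; [|exact Z]. apply Nat.divide_factor_l. }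
    replace (A + q * (2 ^ s * l')) with (A + (q * l') * 2 ^ s) in Z2 by nia.
    rewrite Nat.Div0.mod_add in Z2. exact Z2.
Qed.

End Analysis.

Lemma lt_pow2 : forall n, n < 2 ^ n.
Proof. induction n; simpl; lia. Qed.

Lemma quad_exp : forall lam K, 16 <= lam -> K <= lam -> 4 * lam * lam + K <= 2 ^ lam.
Proof.
  assert (H : forall lam, 16 <= lam -> 8 * lam * lam <= 2 ^ lam).
  { intros lam H. induction H.
    - apply Nat.leb_le. vm_compute. reflexivity.
    - rewrite Nat.pow_succ_r'. nia. }
  intros lam K H1 H2. specialize (H lam H1). nia.
Qed.

Lemma g_mono : forall a b, a <= b -> g a <= g b.
Proof. intros. unfold g. apply Nat.log2_le_mono, Nat.log2_le_mono; auto. Qed.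

Lemma g_drop : forall m v, 16 <= m -> v <= g m -> g m - 1 <= g (m - v).
Proof.
  intros m v Hm Hv. unfold g in *.
  set (lam := Nat.log2 m) in *.
  assert (Hl4 : 4 <= lam).
  { unfold lam. apply Nat.log2_le_pow2; [lia|]. simpl. lia. }
  assert (H2l : 2 ^ lam <= m) by (apply Nat.log2_spec; lia).
  assert (Hvl : v <= lam) by (pose proof (Nat.log2_le_lin lam); lia).
  assert (Hpl : lam <= 2 ^ (lam - 1)).
  { pose proof (lt_pow2 (lam - 1)). lia. }
  assert (Hlm : lam - 1 <= Nat.log2 (m - v)).
  { apply Nat.log2_le_pow2. rewrite (pow2_split (lam - 1) lam) in H2l by lia.
    replace (lam - (lam - 1)) with 1 in H2l by lia. simpl in H2l. lia.
    rewrite (pow2_split (lam - 1) lam) in H2l by lia.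
    replace (lam - (lam - 1)) with 1 in H2l by lia. simpl in H2l. lia. }
  set (J := Nat.log2 lam).
  assert (HJ1 : 1 <= J) by (apply Nat.log2_le_pow2; simpl; lia).
  assert (H2J : 2 ^ J <= lam) by (apply Nat.log2_spec; lia).
  assert (J - 1 <= Nat.log2 (lam - 1)).
  { apply Nat.log2_le_pow2; [lia|]. rewrite (pow2_split (J - 1) J) in H2J by lia.
    replace (J - (J - 1)) with 1 in H2J by lia. simpl in H2J. lia. }
  pose proof (Nat.log2_le_mono _ _ Hlm). lia.
Qed.

Lemma EE_mono : forall i j, i <= j -> EE i <= EE j.
Proof.
  intros i j H. unfold EE. pose proof (BB_mono i j H).
  assert (2 ^ i <= 2 ^ j) by (apply pow_le_mono_r2; auto). nia.
Qed.

Lemma levelwise : forall l u, 1 <= l -> length u = l -> forall e, exists m0, forall m, m0 <= m ->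
  forall k0 N, (forall k, k0 <= k < k0 + N -> 2 ^ m <= k * l + 1 < 2 ^ (m + 1)) ->
  2 ^ e * (cnt (fblock xw u l) k0 N * 2 ^ l) <= 2 ^ e * N + (N + 2 ^ m) * 2 ^ l /\
  2 ^ e * N <= 2 ^ e * (cnt (fblock xw u l) k0 N * 2 ^ l) + (N + 2 ^ m) * 2 ^ l.
Proof.
  intros l u Hl Hu e.
  destruct (val2_spec l) as [l' [Hl' Els]]; [lia|]. set (s := val2 l) in *.
  assert (Hsl : 2 ^ s <= l) by (destruct l'; [discriminate|nia]).
  pose proof (lt_pow2 s).
  set (K := s + e + l + 2).
  exists (2 ^ (2 ^ K + 17 + e)). intros m Hm k0 N Hlv.
  set (lam := Nat.log2 m).
  assert (Hm0 : 0 < m) by (pose proof (pow2_pos (2 ^ K + 17 + e)); lia).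
  assert (Hlam : 2 ^ K + 17 + e <= lam) by (apply Nat.log2_le_pow2; auto).
  assert (H2l : 2 ^ lam <= m) by (apply Nat.log2_spec; lia).
  set (J := g m).
  assert (HJ : J = Nat.log2 lam) by reflexivity.
  assert (HJK : K <= J) by (rewrite HJ; apply Nat.log2_le_pow2; lia).
  assert (H2J : 2 ^ J <= lam) by (rewrite HJ; apply Nat.log2_spec; lia).
  assert (HJl : J <= lam) by (pose proof (lt_pow2 J); lia).
  set (c := J - 1).
  assert (Hc2 : l <= 2 ^ c) by (pose proof (lt_pow2 l); pose proof (pow_le_mono_r2 l c ltac:(unfold c, K in *; lia)); lia).
  assert (HEE : EE J <= 4 * lam * lam).
  { unfold EE, BB. rewrite Nat.pow_add_r. simpl (2 ^ 1). nia. }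
  assert (HEm : EE J + 1 + e <= m).
  { pose proof (quad_exp lam (1 + e) ltac:(lia) ltac:(lia)). lia. }
  assert (HBc : c + 1 <= BB c).
  { unfold BB. pose proof (lt_pow2 (c + 1)). assert (1 <= c) by (unfold c, K in *; lia). nia. }
  assert (HBE : BB c <= EE J) by (pose proof (BB_mono c J ltac:(lia)); pose proof (BB_le_EE J); lia).
  set (beta := BB c). set (Sw := EE J - BB c).
  assert (HlS : l <= Sw).
  { unfold Sw, EE. pose proof (BB_mono c J ltac:(lia)). pose proof (pow_le_mono_r2 c J ltac:(lia)). nia. }
  assert (Hgrp : forall v, v <= c -> c <= g (m - v) /\ l <= 2 ^ g (m - v) /\
      beta <= BB (g (m - v)) /\ v + g (m - v) <= beta /\ EE (g (m - v)) <= beta + Sw).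
  { intros v Hv.
    assert (Hd : J - 1 <= g (m - v)) by (apply g_drop; [pose proof (lt_pow2 (2 ^ K + 17 + e)); lia| unfold J, c in *; lia]).
    assert (Hu' : g (m - v) <= J) by (apply g_mono; lia).
    split; [unfold c; lia|]. split.
    { pose proof (pow_le_mono_r2 c (g (m - v)) ltac:(unfold c; lia)). lia. }
    split; [apply BB_mono; unfold c; lia|]. split.
    { unfold beta, BB. assert (1 <= c) by (unfold c, K in *; lia). pose proof (lt_pow2 (c + 1)). nia. }
    pose proof (EE_mono _ _ Hu'). unfold beta, Sw. lia. }
  assert (Hsc : s <= c + 1) by (unfold c, K in *; lia).
  assert (Hbm : beta <= m) by (unfold beta; lia).
  assert (Hlvl : forall k, k0 <= k < k0 + N -> lvl m (k * l + 1)) by (intros; unfold lvl; apply Hlv; auto).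
  destruct (interval_count l m c beta Sw s l' u Hl Els Hl' Hsc HBc Hbm HlS Hgrp Hu k0 N Hlvl) as [I1 I2].
  pose proof (bad_count l m c beta Sw s l' u Hl Els Hl' Hsc HBc Hbm HlS Hu k0 N) as Bd.
  assert (Hbeta : beta + Sw = EE J) by (unfold beta, Sw; lia).
  rewrite Hbeta in I1, I2.
  set (C := cnt (fblock xw u l) k0 N) in *. set (B := cnt (badk l c) k0 N) in *.
  assert (Hw : 2 ^ e * l <= 2 ^ (c + 1 - s)).
  { clear -HJK Hsc. pose proof (lt_pow2 l).
    pose proof (pow_le_mono_r2 (e + l) (c + 1 - s) ltac:(unfold c, K in *; lia)).
    assert (2 ^ e * l <= 2 ^ e * 2 ^ l) by (apply Nat.mul_le_mono_l; lia).
    rewrite <- Nat.pow_add_r in *. lia. }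
  assert (HQD : N / 2 ^ (c + 1 - s) * 2 ^ (c + 1 - s) <= N).
  { rewrite Nat.mul_comm. apply Nat.Div0.mul_div_le. }
  assert (HEm2 : 2 ^ e * (l + 2 ^ EE J) <= 2 ^ m).
  { clear -HEm Hc2 HJK. assert (HlX : l <= 2 ^ EE J).
    { assert (l <= 2 ^ J) by (pose proof (pow_le_mono_r2 c J ltac:(unfold c; lia)); lia).
      assert (J <= EE J) by (unfold EE; pose proof (pow2_pos J); nia).
      pose proof (pow_le_mono_r2 J (EE J) H0). lia. }
    assert (2 ^ e * (2 * 2 ^ EE J) <= 2 ^ m).
    { rewrite <- Nat.pow_succ_r', <- Nat.pow_add_r. apply pow_le_mono_r2. lia. }
    assert (2 ^ e * (l + 2 ^ EE J) <= 2 ^ e * (2 * 2 ^ EE J)) by (apply Nat.mul_le_mono_l; lia). lia. }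
  assert (HP : 1 <= 2 ^ l) by (pose proof (pow2_pos l); lia).
  clear - I1 I2 Bd Hw HQD HEm2 HP. clearbody C B.
  revert I1 I2 Bd Hw HQD HEm2 HP.
  generalize C B (2 ^ l) (2 ^ e) (2 ^ EE J) (2 ^ m)
     (2 ^ (c + 1 - s)) (N / 2 ^ (c + 1 - s)).
  intros Cn Bn P Ee X M D Q I1 I2 Bd Hw HQD HEm2 HP.
  assert (HwN : Ee * l * Q <= N).
  { assert (Ee * l * Q <= D * Q) by (apply Nat.mul_le_mono_r; auto). lia. }
  assert (HB : Ee * (Bn + X) <= N + M).
  { assert (Ee * Bn <= Ee * (l * (Q + 1))) by (apply Nat.mul_le_mono_l; auto). lia. }
  assert (HBP : Ee * (Bn + X) * P <= (N + M) * P) by (apply Nat.mul_le_mono_r; auto).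
  split.
  - assert (Ee * (Cn * P) <= Ee * (N + (Bn + X) * P)) by (apply Nat.mul_le_mono_l; auto). lia.
  - assert (Ee * N <= Ee * (Cn * P + Bn + X)) by (apply Nat.mul_le_mono_l; auto).
    assert (N + M <= (N + M) * P) by (rewrite <- (Nat.mul_1_r (N + M)) at 1; apply Nat.mul_le_mono_l; auto). lia.
Qed.

Open Scope R_scope.

Lemma abs_bound_real : forall Cr Nr Mr Er Pr, 0 < Er -> 0 < Pr ->
  Er * (Cr * Pr) <= Er * Nr + (Nr + Mr) * Pr -> Er * Nr <= Er * (Cr * Pr) + (Nr + Mr) * Pr ->
  Rabs (Cr - Nr / Pr) <= (Nr + Mr) / Er.
Proof.
  intros Cr Nr Mr Er Pr HE HP H1 H2.
  assert (E1 : Cr - Nr / Pr = (Er * (Cr * Pr) - Er * Nr) / (Er * Pr)) by (field; lra).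
  assert (E2 : (Nr + Mr) / Er = ((Nr + Mr) * Pr) / (Er * Pr)) by (field; lra).
  rewrite E1, E2. unfold Rdiv. rewrite Rabs_mult, (Rabs_right (/ (Er * Pr))).
  2:{ apply Rle_ge, Rlt_le, Rinv_0_lt_compat, Rmult_lt_0_compat; auto. }
  apply Rmult_le_compat_r. apply Rlt_le, Rinv_0_lt_compat, Rmult_lt_0_compat; auto.
  apply Rabs_le. split; lra.
Qed.

Section PartB.
Variables (l : nat) (u : list bool).
Hypothesis Hl : (1 <= l)%nat.
Hypothesis Hu : length u = l.

Definition fb := fblock xw u l.
Definition aN (N : nat) : R := INR (cnt fb 0 N) - INR N / 2 ^ l.

Lemma level_real : forall e, exists m0, forall m, (m0 <= m)%nat ->
  forall k0 N, (forall k, (k0 <= k < k0 + N)%nat -> (2 ^ m <= k * l + 1 < 2 ^ (m + 1))%nat) ->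
  Rabs (aN (k0 + N) - aN k0) <= (INR N + 2 ^ m) / 2 ^ e.
Proof.
  intros e. destruct (levelwise l u Hl Hu e) as [m0 Hm0]. exists m0.
  intros m Hm k0 N Hlv. destruct (Hm0 m Hm k0 N Hlv) as [H1 H2].
  apply le_INR in H1, H2. repeat rewrite ?mult_INR, ?plus_INR, ?pow_INR in H1, H2.
  assert (I2 : INR 2 = 2) by (simpl; lra). rewrite I2 in H1, H2.
  unfold aN. rewrite (cnt_add fb 0 k0 N), plus_INR, plus_INR.
  replace (INR (cnt fb 0 k0) + INR (cnt fb (0 + k0) N) - (INR k0 + INR N) / 2 ^ l -
     (INR (cnt fb 0 k0) - INR k0 / 2 ^ l)) with (INR (cnt fb k0 N) - INR N / 2 ^ l)
    by (simpl; field; apply pow_nonzero; lra).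
  apply abs_bound_real; auto; apply pow_lt; lra.
Qed.


Definition Kl (m : nat) : nat := ((2 ^ m + l - 2) / l)%nat.

Lemma K1 : forall m k, (Kl m <= k)%nat -> (2 ^ m <= k * l + 1)%nat.
Proof.
  intros m k H. unfold Kl in H. pose proof (pow2_pos m).
  pose proof (Nat.div_mod (2 ^ m + l - 2) l ltac:(lia)).
  pose proof (Nat.mod_upper_bound (2 ^ m + l - 2) l ltac:(lia)).
  assert (l * ((2 ^ m + l - 2) / l) <= l * k)%nat by (apply Nat.mul_le_mono_l; auto). lia.
Qed.

Lemma K2 : forall m k, (k < Kl (m + 1))%nat -> (k * l + 1 < 2 ^ (m + 1))%nat.
Proof.
  intros m k H. unfold Kl in H. pose proof (pow2_pos (m + 1)).
  pose proof (Nat.div_mod (2 ^ (m + 1) + l - 2) l ltac:(lia)).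
  assert (l * (k + 1) <= l * ((2 ^ (m + 1) + l - 2) / l))%nat by (apply Nat.mul_le_mono_l; lia). lia.
Qed.

Lemma K3 : forall m, (Kl m <= Kl (m + 1))%nat.
Proof.
  intros m. unfold Kl. apply Nat.Div0.div_le_mono.
  rewrite Nat.pow_add_r. simpl (2 ^ 1)%nat. pose proof (pow2_pos m). lia.
Qed.

Lemma K_mono : forall a b, (a <= b)%nat -> (Kl a <= Kl b)%nat.
Proof.
  intros a b H. unfold Kl. apply Nat.Div0.div_le_mono.
  pose proof (pow_le_mono_r2 a b H). lia.
Qed.

Lemma K4 : forall N, (Kl (Nat.log2 (N * l + 1)) <= N <= Kl (Nat.log2 (N * l + 1) + 1))%nat.
Proof.
  intros N. set (m := Nat.log2 (N * l + 1)).
  pose proof (Nat.log2_spec (N * l + 1) ltac:(lia)) as [S1 S2]. fold m in S1, S2.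
  replace (Datatypes.S m) with (m + 1)%nat in S2 by lia.
  split; unfold Kl.
  - assert ((2 ^ m + l - 2) / l < N + 1)%nat by (apply Nat.Div0.div_lt_upper_bound; lia). lia.
  - apply Nat.div_le_lower_bound; lia.
Qed.

Lemma K5 : forall N m, (2 ^ m <= N * l + 1)%nat -> (m <= Nat.log2 (N * l + 1))%nat.
Proof. intros. apply Nat.log2_le_pow2; lia. Qed.

Lemma chain : forall e m0,
  (forall m, (m0 <= m)%nat -> forall k0 N, (forall k, (k0 <= k < k0 + N)%nat -> (2 ^ m <= k * l + 1 < 2 ^ (m + 1))%nat) ->
     Rabs (aN (k0 + N) - aN k0) <= (INR N + 2 ^ m) / 2 ^ e) ->
  forall j N, (Kl (m0 + j) <= N <= Kl (m0 + j + 1))%nat ->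
  Rabs (aN N - aN (Kl m0)) <= (INR (N - Kl m0) + 2 ^ (m0 + j + 1)) / 2 ^ e.
Proof.
  intros e m0 Hlev. pose proof (pow_lt 2 e ltac:(lra)) as HE.
  induction j; intros N HN.
  - rewrite Nat.add_0_r in HN.
    pose proof (Hlev m0 (le_n _) (Kl m0) (N - Kl m0)%nat) as H.
    replace (Kl m0 + (N - Kl m0))%nat with N in H by lia.
    assert (Rabs (aN N - aN (Kl m0)) <= (INR (N - Kl m0) + 2 ^ m0) / 2 ^ e).
    { apply H. intros k Hk. split; [apply K1; lia|apply K2; lia]. }
    rewrite Nat.add_0_r. eapply Rle_trans; [exact H0|].
    apply Rmult_le_compat_r; [apply Rlt_le, Rinv_0_lt_compat; auto|].
    rewrite pow_add. pose proof (pow_lt 2 m0 ltac:(lra)). simpl. lra.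
  - set (k1 := Kl (m0 + S j)).
    pose proof (Hlev (m0 + S j)%nat ltac:(lia) k1 (N - k1)%nat) as H.
    replace (k1 + (N - k1))%nat with N in H by (unfold k1 in *; lia).
    assert (A1 : Rabs (aN N - aN k1) <= (INR (N - k1) + 2 ^ (m0 + S j)) / 2 ^ e).
    { apply H. intros k Hk. unfold k1 in *. split; [apply K1; lia|apply K2].
      replace (m0 + S j + 1)%nat with (m0 + S j + 1)%nat by lia. lia. }
    assert (A2 : Rabs (aN k1 - aN (Kl m0)) <= (INR (k1 - Kl m0) + 2 ^ (m0 + j + 1)) / 2 ^ e).
    { apply IHj. unfold k1. split. pose proof (K3 (m0 + j)). replace (m0 + S j)%nat with (m0 + j + 1)%nat by lia. lia.
      replace (m0 + S j)%nat with (m0 + j + 1)%nat by lia. lia. }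
    assert (Hk0 : (Kl m0 <= k1)%nat).
    { unfold k1. apply K_mono. lia. }
    assert (E1 : INR (N - Kl m0) = INR (N - k1) + INR (k1 - Kl m0)).
    { rewrite <- plus_INR. f_equal. unfold k1 in *. lia. }
    replace (aN N - aN (Kl m0)) with ((aN N - aN k1) + (aN k1 - aN (Kl m0))) by ring.
    eapply Rle_trans; [apply Rabs_triang|].
    replace (m0 + j + 1)%nat with (m0 + S j)%nat in A2 by lia.
    replace (m0 + S j + 1)%nat with (S (m0 + S j)) by lia. rewrite E1.
    simpl (2 ^ S _). unfold Rdiv in *. lra.
Qed.

Lemma main_bound : forall e, exists m0 A, forall N, (Kl m0 <= N)%nat ->
  Rabs (aN N) <= A + (INR N + 2 * (INR N * INR l + 1)) / 2 ^ e.
Proof.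
  intros e. destruct (level_real e) as [m0 Hlev]. exists m0, (Rabs (aN (Kl m0))).
  intros N HN. set (m := Nat.log2 (N * l + 1)).
  assert (Hm : (m0 <= m)%nat) by (apply K5; pose proof (K1 m0 N HN); lia).
  pose proof (K4 N) as HK. fold m in HK.
  pose proof (chain e m0 Hlev (m - m0)%nat N ltac:(replace (m0 + (m - m0))%nat with m by lia; exact HK)) as Hc.
  replace (m0 + (m - m0) + 1)%nat with (S m) in Hc by lia.
  assert (H2m : 2 ^ m <= INR N * INR l + 1).
  { pose proof (Nat.log2_spec (N * l + 1) ltac:(lia)) as [S1 _]. fold m in S1.
    apply le_INR in S1. rewrite pow_INR, plus_INR, mult_INR in S1. simpl (INR 2) in S1.
    replace (1 + 1) with 2 in S1 by lra. simpl in S1. lra. }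
  assert (HNm : INR (N - Kl m0) <= INR N) by (apply le_INR; lia).
  pose proof (pow_lt 2 e ltac:(lra)) as HE.
  replace (aN N) with ((aN N - aN (Kl m0)) + aN (Kl m0)) by ring.
  eapply Rle_trans; [apply Rabs_triang|].
  assert (Hc2 : (INR (N - Kl m0) + 2 ^ S m) / 2 ^ e <= (INR N + 2 * (INR N * INR l + 1)) / 2 ^ e).
  { apply Rmult_le_compat_r; [apply Rlt_le, Rinv_0_lt_compat; auto|]. simpl (2 ^ S m). lra. }
  lra.
Qed.

End PartB.

Lemma final_real : forall c Nn n L A Ep P eps, 1 <= L -> 1 <= P -> 1 <= Ep -> 0 < n -> 0 <= Nn ->
  Nn * L <= n -> n < Nn * L + L -> 0 <= A ->
  Rabs (c - Nn / P) <= A + (Nn + 2 * (Nn * L + 1)) / Ep ->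
  (1 + 2 * L) / Ep < eps / 2 -> (A * L + 3 * L) / n < eps / 2 ->
  Rabs (c / (n / L) - / P) < eps.
Proof.
  intros c Nn n L A Ep P eps HL HP HE Hn HN H1 H2 HA Hc He Hn2.
  assert (Eq : c / (n / L) - / P = (c - Nn / P) * (L / n) + (Nn * L - n) / (n * P)) by (field; lra).
  rewrite Eq. eapply Rle_lt_trans; [apply Rabs_triang|].
  set (r := L / n). set (q := / Ep). set (t := Nn * L / n).
  assert (Hr : 0 < r) by (unfold r; apply Rdiv_lt_0_compat; lra).
  assert (Hq : 0 < q /\ q <= 1).
  { unfold q. split. apply Rinv_0_lt_compat; lra. rewrite <- Rinv_1. apply Rinv_le_contravar; lra. }
  assert (Ht : 0 <= t <= 1).
  { unfold t. split. apply Rmult_le_pos; [nra|apply Rlt_le, Rinv_0_lt_compat; lra].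
    apply (Rmult_le_reg_r n); auto. unfold Rdiv. rewrite Rmult_assoc, Rinv_l by lra. lra. }
  assert (T1 : Rabs ((c - Nn / P) * (L / n)) <= A * r + q + 2 * L * q + 2 * q * r).
  { rewrite Rabs_mult, (Rabs_right (L / n)) by (fold r; lra). fold r.
    eapply Rle_trans. apply Rmult_le_compat_r; [lra|exact Hc].
    assert (Eq2 : (A + (Nn + 2 * (Nn * L + 1)) / Ep) * r = A * r + t * q + 2 * L * t * q + 2 * q * r).
    { unfold r, t, q. field. lra. }
    rewrite Eq2. destruct Hq.
    assert (t * q <= q) by nra.
    assert (L * (t * q) <= L * q) by (apply Rmult_le_compat_l; lra). lra. }
  assert (T2 : Rabs ((Nn * L - n) / (n * P)) <= r).
  { unfold Rdiv. rewrite Rabs_mult, (Rabs_right (/ (n * P))).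
    2:{ apply Rle_ge, Rlt_le, Rinv_0_lt_compat; nra. }
    unfold r. unfold Rdiv.
    assert (Rabs (Nn * L - n) <= L) by (apply Rabs_le; lra).
    assert (/ (n * P) <= / n).
    { apply Rinv_le_contravar; [lra| rewrite <- (Rmult_1_r n) at 1; apply Rmult_le_compat_l; lra]. }
    apply Rmult_le_compat; auto. apply Rabs_pos. apply Rlt_le, Rinv_0_lt_compat; nra. }
  assert (Er : (A * L + 3 * L) / n = A * r + 3 * r) by (unfold r; field; lra).
  assert (Eq3 : (1 + 2 * L) / Ep = q + 2 * L * q) by (unfold q; field; lra).
  destruct Hq. assert (q * r <= 1 * r) by (apply Rmult_le_compat_r; lra). fold r in T1. lra.
Qed.

Lemma aligned_cnt : forall x u n, aligned_occ x u n = cnt (fblock x u (length u)) 0 (n / length u).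
Proof. reflexivity. Qed.

Lemma xw_normal : normal xw.
Proof.
  intros l u Hl Hu eps Heps.
  destruct (INR_archimed (eps / 2) (1 + 2 * INR l)) as [e He]; [lra|].
  destruct (main_bound l u Hl Hu e) as [m0 [A HA]].
  destruct (INR_archimed (eps / 2) (Rabs A * INR l + 3 * INR l)) as [n1 Hn1]; [lra|].
  exists (Nat.max (Nat.max n1 (l * Kl l m0)) 1).
  intros n Hn. unfold R_dist.
  rewrite aligned_cnt, Hu.
  set (N := (n / l)%nat).
  assert (HnN : (l * N <= n)%nat) by (apply Nat.Div0.mul_div_le).
  assert (HnN2 : (n < l * N + l)%nat).
  { pose proof (Nat.div_mod n l ltac:(lia)). pose proof (Nat.mod_upper_bound n l ltac:(lia)). fold N in H. lia. }
  assert (HNK : (Kl l m0 <= N)%nat).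
  { apply Nat.div_le_lower_bound; lia. }
  assert (HP : 1 <= 2 ^ l) by (apply pow_R1_Rle; lra).
  assert (HE : 1 <= 2 ^ e) by (apply pow_R1_Rle; lra).
  assert (HL : 1 <= INR l) by (apply (le_INR 1); lia).
  assert (Hn0 : 0 < INR n) by (apply lt_0_INR; lia).
  assert (Hen : INR e < 2 ^ e).
  { pose proof (lt_pow2 e). apply lt_INR in H. rewrite pow_INR in H. simpl (INR 2) in H.
    replace (1 + 1) with 2 in H by lra. exact H. }
  apply (final_real (INR (cnt (fblock xw u l) 0 N)) (INR N) (INR n) (INR l) (Rabs A) (2 ^ e) (2 ^ l) eps); auto.
  - apply pos_INR.
  - rewrite <- mult_INR. apply le_INR. lia.
  - rewrite <- mult_INR, <- plus_INR. apply lt_INR. lia.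
  - apply Rabs_pos.
  - pose proof (HA N HNK). unfold aN, fb in H.
    pose proof (Rle_abs A). lra.
  - apply (Rmult_lt_reg_r (2 ^ e)); [lra|]. unfold Rdiv. rewrite Rmult_assoc, Rinv_l by lra.
    assert (INR e * (eps / 2) <= 2 ^ e * (eps / 2)) by (apply Rmult_le_compat_r; lra). lra.
  - apply (Rmult_lt_reg_r (INR n)); [lra|]. unfold Rdiv. rewrite Rmult_assoc, Rinv_l by lra.
    assert (INR n1 <= INR n) by (apply le_INR; lia).
    assert (INR n1 * (eps / 2) <= INR n * (eps / 2)) by (apply Rmult_le_compat_r; lra). lra.
Qed.

Theorem theorem9 :
  exists x : word, normal x /\ (forall k : nat, x k = even_word x k).
Proof.
  exists xw. split.
  - exact xw_normal.
  - intros k. unfold even_word. apply xw_even.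
Qed.
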